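(* For any positive integers $r,t,c,m,p$ there exists a positive integer $s=s(r,t,c,m,p)$ such that the following holds. Let $G$ be a bipartite graph with bipartition $\{A,B\}$ whose edges are each coloured with an element of $[c]$, and suppose $G$ has no subgraph isomorphic to $K_{r,t}$ whose part of size $t$ is contained in $A$. If $|A|\ge s$, then there exists $A'\subseteq A$ with $|A'|\ge m$ such that for every $T\subseteq B$ with $|T|\le p$ there exists $M_T\subseteq A'$ with $|M_T|\ge m$ such that for every $v\in T$, either there is $c_v\in[c]$ such that $v$ is adjacent to every vertex of $A'$ via edges of colour $c_v$, or $v$ has no neighbour in $M_T$.
   Context: Graphs are finite and simple; $[c]=\{1,\dots,c\}$. *)

(* Defs.v *)
From mathcomp Require Import all_boot.
Set Implicit Arguments. Unset Strict Implicit. Unset Printing Implicit Defensive.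

(* A bipartite graph with bipartition {A,B} is given by two finite types A, B
   (the two disjoint parts) and an edge relation E : A -> B -> bool.
   An edge colouring with colours in [c] is col : A -> B -> 'I_c
   ('I_c = {0,...,c-1}, in bijection with [c]); only its values on edges matter. *)

Definition has_Krt_tA (A B : finType) (E : A -> B -> bool) (r t : nat) : Prop :=
  exists (S : {set A}) (R : {set B}),
    #|S| = t /\ #|R| = r /\ forall a b, a \in S -> b \in R -> E a b.

(* Main.v *)
Require Import Defs.
From mathcomp Require Import all_boot zify.
Set Implicit Arguments. Unset Strict Implicit. Unset Printing Implicit Defensive.

Lemma ex_sub (T : finType) (X : {set T}) n : n <= #|X| -> exists S : {set T}, S \subset X /\ #|S| = n.
Proof.
elim: n => [|n IH] Hn; first by exists set0; rewrite sub0set cards0.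
have [S [SX cS]] := IH (ltnW Hn).
have : 0 < #|X :\: S| by rewrite cardsDS // cS subn_gt0.
rewrite card_gt0 => /set0Pn [x]; rewrite inE => /andP [xS xX].
exists (x |: S); split; first by rewrite subUset sub1set xX.
by rewrite cardsU1 xS cS.
Qed.

Lemma card_bigcup_le (I T : finType) (P : pred I) (F : I -> {set T}) :
  #|\bigcup_(i | P i) F i| <= \sum_(i | P i) #|F i|.
Proof.
elim/big_rec2: _ => [|i y x Pi h]; first by rewrite cards0.
apply: leq_trans (leq_card_setU _ _) _; exact: leq_add.
Qed.

Definition Kfree (A B : finType) (E : A -> B -> bool) (X : {set A}) (r t : nat) :=
  ~ exists (S : {set A}) (R : {set B}), S \subset X /\ #|S| = t /\ #|R| = r /\
      forall a b, a \in S -> b \in R -> E a b.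

Definition mono (A B : finType) c (E : A -> B -> bool) (col : A -> B -> 'I_c) (A' : {set A}) v :=
  [exists k : 'I_c, [forall a in A', E a v && (col a v == k)]].

Definition good (A B : finType) c p m (E : A -> B -> bool) (col : A -> B -> 'I_c) (A' : {set A}) v :=
  mono E col A' v || (p * #|[set a in A' | E a v]| + m <= #|A'|).

Lemma good_ext (A B : finType) c p m (E1 E2 : A -> B -> bool) (col : A -> B -> 'I_c) A' v :
  (forall a, E1 a v = E2 a v) -> good p m E1 col A' v = good p m E2 col A' v.
Proof.
move=> H; rewrite /good /mono.
have -> : [set a in A' | E1 a v] = [set a in A' | E2 a v] by apply/setP=> a; rewrite !inE H.
congr (_ || _); apply: eq_existsb => k; apply: eq_forallb => a; by rewrite H.
Qed.

Lemma keyP (t c p : nat) : 0 < t -> forall r m, exists S, forall (A B : finType)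
  (E : A -> B -> bool) (col : A -> B -> 'I_c) (X : {set A}),
  S <= #|X| -> Kfree E X r t ->
  exists A' : {set A}, A' \subset X /\ m <= #|A'| /\ forall v, good p m E col A' v.
Proof.
move=> tpos; elim=> [|r IH] m.
  exists t => A B E col X HX HK; exfalso; apply: HK.
  have [S [SX cS]] := ex_sub HX.
  exists S; exists set0; rewrite cards0; split=> //; split=> //; split=> // a b _; by rewrite inE.
have [S1 HS1] := IH m.
exists (p * (c * S1) + m) => A B E col X HX HK.
case: (boolP [exists v, exists k : 'I_c, S1 <= #|[set a in X | E a v && (col a v == k)]|]).
  case/existsP=> v /existsP [k Hk].
  set Y := [set a in X | E a v && (col a v == k)] in Hk.
  pose E' := fun a b => E a b && (b != v).
  have HK' : Kfree E' Y r t.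
    case=> S0 [R [S0Y [cS0 [cR HSR]]]]; apply: HK.
    have : 0 < #|S0| by rewrite cS0.
    rewrite card_gt0 => /set0Pn [a0 a0S].
    have vR : v \notin R by apply/negP=> vR; move: (HSR _ _ a0S vR); rewrite /E' eqxx andbF.
    exists S0, (v |: R); split.
      by apply: subset_trans S0Y _; apply/subsetP=> a; rewrite inE => /andP [].
    split=> //; split; first by rewrite cardsU1 vR cR.
    move=> a b aS; rewrite in_setU1 => /orP [/eqP -> | bR].
      by move/subsetP: S0Y => /(_ a aS); rewrite inE => /and3P [].
    by move: (HSR _ _ aS bR); rewrite /E' => /andP [].
  have [A' [A'Y [mA' HA']]] := HS1 A B E' col Y Hk HK'.
  exists A'; split.
    by apply: subset_trans A'Y _; apply/subsetP=> a; rewrite inE => /andP [].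
  split=> // w.
  case: (eqVneq w v) => [-> | wv].
    rewrite /good /mono; apply/orP; left; apply/existsP; exists k; apply/forallP=> a.
    apply/implyP=> aA; move/subsetP: A'Y => /(_ a aA); by rewrite inE => /andP [].
  rewrite -(@good_ext _ _ _ p m E' E col A' w); first exact: HA'.
  by move=> a; rewrite /E' wv andbT.
rewrite negb_exists => /forallP Hsmall.
exists X; split=> //; split.
  by apply: leq_trans HX; apply: leq_addl.
move=> v; rewrite /good; apply/orP; right; apply: leq_trans HX; rewrite leq_add2r leq_mul2l.
apply/orP; right.
have -> : [set a in X | E a v] = \bigcup_(k < c) [set a in X | E a v && (col a v == k)].
  apply/setP=> a; rewrite inE; apply/andP/bigcupP.
    by case=> aX Ea; exists (col a v) => //; rewrite inE aX Ea eqxx.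
  by case=> k _; rewrite inE => /and3P [].
apply: leq_trans (card_bigcup_le _ _) _.
apply: (@leq_trans (\sum_(k < c) S1)); last by rewrite sum_nat_const card_ord.
apply: leq_sum => k _.
move: (Hsmall v); rewrite negb_exists => /forallP /(_ k); rewrite -ltnNge; exact: ltnW.
Qed.

Theorem mainTheorem9 (r t c m p : nat) :
  0 < r -> 0 < t -> 0 < c -> 0 < m -> 0 < p ->
  exists s : nat, 0 < s /\
    forall (A B : finType) (E : A -> B -> bool) (col : A -> B -> 'I_c),
      ~ has_Krt_tA E r t ->
      s <= #|A| ->
      exists A' : {set A}, m <= #|A'| /\
        forall T : {set B}, #|T| <= p ->
          exists MT : {set A}, MT \subset A' /\ m <= #|MT| /\
            forall v, v \in T ->
              (exists cv : 'I_c, forall a, a \in A' -> E a v /\ col a v = cv)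
              \/ (forall a, a \in MT -> ~~ E a v).
Proof.
move=> rpos tpos cpos mpos ppos.
have [S HS] := keyP c p tpos r m.
exists S.+1; split=> // A B E col HK HA.
have HK' : Kfree E [set: A] r t.
  case=> S0 [R [_ [cS0 [cR H]]]]; apply: HK; by exists S0, R.
have HA' : S <= #|[set: A]| by rewrite cardsT; apply: ltnW.
have [A' [_ [mA' Hg]]] := HS A B E col _ HA' HK'.
exists A'; split=> // T cT.
pose MT := [set a in A' | [forall v in T, ~~ mono E col A' v ==> ~~ E a v]].
exists MT; split; first by apply/subsetP=> a; rewrite inE => /andP [].
split.
  have sub : A' :\: MT \subset \bigcup_(v in T | ~~ mono E col A' v) [set a in A' | E a v].
    apply/subsetP=> a; rewrite !inE => /andP [nMT aA]; move: nMT; rewrite aA /= negb_forall => /existsP [v]; rewrite negb_imply => /andP [vT].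
    rewrite negb_imply negbK => /andP [nm Ea].
    by apply/bigcupP; exists v; rewrite ?vT ?nm // inE aA.
  have c1 := subset_leq_card sub.
  have c2 := card_bigcup_le (fun v => (v \in T) && ~~ mono E col A' v) (fun v => [set a in A' | E a v]).
  have c3 : p * (\sum_(v in T | ~~ mono E col A' v) #|[set a in A' | E a v]|) <= p * (#|A'| - m).
    rewrite big_distrr /=.
    apply: (@leq_trans (\sum_(v in T) (#|A'| - m))).
      rewrite [X in _ <= X](bigID (fun v => ~~ mono E col A' v)) /=.
      apply: leq_trans (leq_addr _ _); apply: leq_sum => v /andP [_ nm].
      move: (Hg v); rewrite /good (negbTE nm) /= => h.
      lia.
    rewrite sum_nat_const; nia.
  move: c3; rewrite leq_mul2l eqn0Ngt ppos /= => c3.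
  have := cardsID MT A'.
  have -> : A' :&: MT = MT by apply/setIidPr/subsetP=> a; rewrite inE => /andP [].
  move=> e; have : #|A' :\: MT| <= #|A'| - m by apply: leq_trans c1 (leq_trans c2 c3).
  by rewrite -e; lia.
move=> v vT; case: (boolP (mono E col A' v)) => [/existsP [k /forallP Hk] | nm].
  left; exists k => a aA; move: (Hk a); rewrite aA /= => /andP [-> /eqP ->]; by [].
right => a; rewrite inE => /andP [_ /forallP /(_ v)]; by rewrite vT nm.
Qed.
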